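(* Let $\rho$ be a positive semidefinite matrix on $\mathbb{C}^M\otimes\mathbb{C}^N$ of rank $r$, with spectral-type decomposition $\rho=\sum_{l=1}^r|\Psi_l\rangle\langle\Psi_l|$ ($|\Psi_l\rangle=\sqrt{\lambda_l}|\psi_l\rangle$, $\lambda_l>0$ the eigenvalues, $|\psi_l\rangle$ orthonormal eigenvectors), and let $\rho=\sum_{k=1}^K|\Phi_k\rangle\langle\Phi_k|$ be another decomposition into $K\ge r$ rank-one terms. Let $w_{mn}\in\mathbb{C}^r$ and $w'_{mn}\in\mathbb{C}^K$ ($m=1,\dots,M$, $n=1,\dots,N$) be the corresponding Gram vectors, $w_{mn}^l=\langle\Psi_l|e_m\otimes f_n\rangle$, $w'^{\,k}_{mn}=\langle\Phi_k|e_m\otimes f_n\rangle$. Suppose $v_1,\dots,v_N\in\mathbb{C}^r$ are linearly independent and $F_1,\dots,F_M:\mathbb{C}^r\to\mathbb{C}^r$ are linear maps with $w_{mn}=F_mv_n$ for all $m,n$, and suppose $v'_1,\dots,v'_N\in\mathbb{C}^K$ are linearly independent and $F'_1,\dots,F'_M:\mathbb{C}^K\to\mathbb{C}^K$ are linear maps with $w'_{mn}=F'_mv'_n$ for all $m,n$. Then there exist $K\times r$ matrices $V$ and $\tilde V$, with $V^\dagger V=I_r$ and $\tilde V$ of rank $r$, such that $V^\dagger F'_m\tilde V v=F_m v$ for every $m=1,\dots,M$ and every $v\in\operatorname{span}\{v_1,\dots,v_N\}$.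
   Context: $\{|e_m\rangle\}_{m=1}^M$ and $\{|f_n\rangle\}_{n=1}^N$ are fixed orthonormal bases of $\mathbb{C}^M$ and $\mathbb{C}^N$. The scalar product on $\mathbb{C}^K$ is $\langle u,v\rangle=\sum_l\overline{u^l}v^l$. A family of vectors $\{w_{mn}\}\subset\mathbb{C}^K$ is a Gram system for $\rho$ if $\rho_{ij,mn}:=\langle e_i\otimes f_j|\rho|e_m\otimes f_n\rangle=\langle w_{ij},w_{mn}\rangle$ for all $i,j,m,n$; the vectors defined in the claim are Gram systems for $\rho$. *)

(* Defs.v *)
From HB Require Import structures.
From mathcomp Require Import all_boot all_order all_algebra.
Set Implicit Arguments. Unset Strict Implicit. Unset Printing Implicit Defensive.
Import Order.TTheory GRing.Theory Num.Theory.
Local Open Scope ring_scope.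

(* Complex scalars: an arbitrary numClosedFieldType C (algebraically closed
   field with conjugation and order on reals), e.g. algC. *)

Definition hadj (C : numClosedFieldType) m n (A : 'M[C]_(m, n)) : 'M[C]_(n, m) :=
  (map_mx Num.conj A)^T.

Definition psd (C : numClosedFieldType) d (A : 'M[C]_d) : Prop :=
  hadj A = A /\ forall x : 'cV[C]_d, 0 <= (hadj x *m A *m x) 0 0.

(* Standard basis vector e_m (x) f_n of C^M (x) C^N = C^(M*N); the tensor
   index (m,n) is encoded by mathcomp's mxvec_index. *)
Definition ebasis (C : numClosedFieldType) M N (m : 'I_M) (n : 'I_N) : 'cV[C]_(M * N) :=
  delta_mx (mxvec_index m n) 0.

Definition gram_vec (C : numClosedFieldType) M N r (Psi : 'I_r -> 'cV[C]_(M * N))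
  (m : 'I_M) (n : 'I_N) : 'cV[C]_r :=
  \col_(l < r) (hadj (Psi l) *m ebasis C m n) 0 0.

(* Main.v *)
Require Import Defs.
From HB Require Import structures.
From mathcomp Require Import all_boot all_order all_algebra.
Set Implicit Arguments. Unset Strict Implicit. Unset Printing Implicit Defensive.
Import Order.TTheory GRing.Theory Num.Theory.
Local Open Scope ring_scope.
Section H.
Variable C : numClosedFieldType.
Lemma hadjM m n p (A : 'M[C]_(m,n)) (B : 'M[C]_(n,p)) : hadj (A *m B) = hadj B *m hadj A.
Proof. by rewrite /hadj map_mxM trmx_mul. Qed.
Lemma hadjK m n (A : 'M[C]_(m,n)) : hadj (hadj A) = A.
Proof. by apply/matrixP=> i j; rewrite !mxE conjCK. Qed.
Lemma hadjB m n (A B : 'M[C]_(m,n)) : hadj (A - B) = hadj A - hadj B.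
Proof. by apply/matrixP=> i j; rewrite !mxE rmorphB. Qed.
Lemma hadj1 n : hadj (1%:M : 'M[C]_n) = 1%:M.
Proof. by apply/matrixP=> i j; rewrite !mxE eq_sym rmorph_nat. Qed.
Lemma hadjZ m n c (A : 'M[C]_(m,n)) : hadj (c *: A) = c^* *: hadj A.
Proof. by apply/matrixP=> i j; rewrite !mxE rmorphM. Qed.
Lemma hadj_eq0 m n (E : 'M[C]_(m,n)) : hadj E *m E = 0 -> E = 0.
Proof.
move=> H; apply/matrixP=> i j; have := congr1 (fun X : 'M[C]_n => X j j) H.
rewrite !mxE => /eqP; rewrite psumr_eq0 => [/allP Hall|k _].
  have := Hall i (mem_index_enum _); rewrite !mxE implyTb mulrC -normCK.
  by rewrite sqrf_eq0 normr_eq0 => /eqP.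
by rewrite !mxE mulrC -normCK exprn_ge0.
Qed.
End H.
Section M.
Variable C : numClosedFieldType.
Definition colsmx p k (X : 'I_k -> 'cV[C]_p) : 'M[C]_(p,k) := \matrix_(i, l) X l i 0.
Lemma eq_colsmx p k (X Y : 'I_k -> 'cV[C]_p) : (forall l, X l = Y l) -> colsmx X = colsmx Y.
Proof. by move=> h; apply/matrixP=> i l; rewrite !mxE h. Qed.
Lemma colsmxM p p' k (B : 'M[C]_(p',p)) (X : 'I_k -> 'cV[C]_p) :
  colsmx (fun l => B *m X l) = B *m colsmx X.
Proof. by apply/matrixP=> i l; rewrite !mxE; apply: eq_bigr => j _; rewrite !mxE. Qed.
Lemma colsmx_tr p k (X : 'I_k -> 'cV[C]_p) : colsmx X = (\matrix_l (X l)^T)^T.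
Proof. by apply/matrixP=> i l; rewrite !mxE. Qed.
Lemma gram_colsmx M N k (X : 'I_k -> 'cV[C]_(M * N)) m n :
  gram_vec X m n = hadj (colsmx X) *m ebasis C m n.
Proof.
apply/matrixP=> l z; rewrite (ord1 z) !mxE; apply: eq_bigr => i _; rewrite !mxE //.
Qed.
Lemma sum_colsmx p k (X : 'I_k -> 'cV[C]_p) :
  \sum_l X l *m hadj (X l) = colsmx X *m hadj (colsmx X).
Proof.
apply/matrixP=> i j; rewrite summxE !mxE; apply: eq_bigr => l _.
by rewrite !mxE big_ord1 !mxE.
Qed.
Lemma colsmx_gram p k (X : 'I_k -> 'cV[C]_p) i j :
  (hadj (colsmx X) *m colsmx X) i j = (hadj (X i) *m X j) 0 0.
Proof. by rewrite !mxE; apply: eq_bigr => a _; rewrite !mxE. Qed.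
End M.
Section W.
Variable F : fieldType.
Lemma rank_unitl n p (Y : 'M[F]_n) (X : 'M[F]_(n,p)) : Y \in unitmx -> \rank (Y *m X) = \rank X.
Proof.
move=> uY; apply/eqP; rewrite eqn_leq mxrankM_maxr /=.
by rewrite -{1}(mulKmx uY X) mxrankM_maxr.
Qed.
Lemma exists_W N r K (A : 'M[F]_(N,r)) (A' : 'M[F]_(N,K)) :
  row_free A -> row_free A' -> (r <= K)%N ->
  exists W : 'M[F]_(r,K), A *m W = A' /\ \rank W = r.
Proof.
move=> fA fA' rK.
have NR : (N <= r)%N by rewrite -(eqP fA) rank_leq_col.
have eA := mulmx_ebase A; have eA' := mulmx_ebase A'.
rewrite (eqP fA) in eA; rewrite (eqP fA') in eA'.
move: (col_ebase A) (row_ebase A) (col_ebase_unit A) (row_ebase_unit A) eA => L U uL uU eA.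
move: (col_ebase A') (row_ebase A') (col_ebase_unit A') (row_ebase_unit A') eA' => L' U' uL' uU' eA'.
pose G := invmx L *m L'.
have uG : G \in unitmx by rewrite unitmx_mul unitmx_inv uL uL'.
pose p : 'M[F]_(r,N) := pid_mx N. pose q : 'M[F]_(N,r) := pid_mx N.
have qp : q *m p = 1%:M by rewrite mul_pid_mx minnn (minn_idPr NR) pid_mx_1.
pose Y := 1%:M + p *m (G - 1%:M) *m q.
pose Yi := 1%:M + p *m (invmx G - 1%:M) *m q.
have YiY : Yi *m Y = 1%:M.
  have ba : (invmx G - 1%:M) *m (G - 1%:M) = - ((G - 1%:M) + (invmx G - 1%:M)).
    rewrite mulmxBl mulmxBr mulmxBr (mulVmx uG) !mul1mx mulmx1.
    by rewrite [RHS]opprD [RHS]addrC (opprB (invmx G)).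
  rewrite /Yi /Y; move: ba; set a := G - 1%:M; set b := invmx G - 1%:M => ba.
  rewrite mulmxDl mul1mx mulmxDr mulmx1 -!mulmxA.
  rewrite [q *m (p *m _)]mulmxA qp mul1mx (mulmxA b a q) ba.
  rewrite mulNmx mulmxN (mulmxDl a b q) (mulmxDr p).
  set x := p *m (a *m q); set y := p *m (b *m q).
  have -> : y + - (x + y) = - x by rewrite opprD addrCA subrr addr0.
  by rewrite addrK.
have uY : Y \in unitmx by case: (mulmx1_unit YiY).
pose W := invmx U *m (Y *m (pid_mx r *m U')).
exists W; split.
  rewrite /W -eA -eA' -!mulmxA (mulmxA U) (mulmxV uU) mul1mx.
  have qY : q *m Y = G *m q.
    by rewrite /Y mulmxDr mulmx1 !mulmxA qp mul1mx mulmxBl mul1mx addrC subrK.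
  rewrite (mulmxA q Y) qY -mulmxA (mulmxA q) mul_pid_mx (minn_idPl NR) (minn_idPr NR).
  by rewrite /G -!mulmxA (mulKVmx uL).
rewrite /W rank_unitl ?unitmx_inv // rank_unitl // mxrankMfree ?row_free_unit //.
by rewrite rank_pid_mx.
Qed.
End W.
Theorem theorem1 (C : numClosedFieldType) (M N r K : nat)
  (rho : 'M[C]_(M * N))
  (lam : 'I_r -> C) (psi Psi : 'I_r -> 'cV[C]_(M * N))
  (Phi : 'I_K -> 'cV[C]_(M * N))
  (v : 'I_N -> 'cV[C]_r) (F : 'I_M -> 'M[C]_r)
  (v' : 'I_N -> 'cV[C]_K) (F' : 'I_M -> 'M[C]_K) :
  psd rho ->
  \rank rho = r ->
  (forall l, 0 < lam l) ->
  (forall l l', hadj (psi l) *m psi l' = (l == l')%:R%:M) ->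
  (forall l, rho *m psi l = lam l *: psi l) ->
  (forall l, Psi l = sqrtC (lam l) *: psi l) ->
  rho = \sum_(l < r) Psi l *m hadj (Psi l) ->
  (r <= K)%N ->
  rho = \sum_(k < K) Phi k *m hadj (Phi k) ->
  row_free (\matrix_(n < N) (v n)^T) ->
  (forall m n, gram_vec Psi m n = F m *m v n) ->
  row_free (\matrix_(n < N) (v' n)^T) ->
  (forall m n, gram_vec Phi m n = F' m *m v' n) ->
  exists V Vt : 'M[C]_(K, r),
    [/\ hadj V *m V = 1%:M, \rank Vt = r &
      forall (m : 'I_M) (x : 'cV[C]_r),
        (x^T <= \matrix_(n < N) (v n)^T)%MS ->
        hadj V *m F' m *m Vt *m x = F m *m x].
Proof.
move=> _ _ lam_gt0 orth _ hPsi rhoP rK rhoQ fA gP fA' gQ.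
rewrite sum_colsmx in rhoP; rewrite sum_colsmx in rhoQ.
set P := colsmx Psi in rhoP; set Q := colsmx Phi in rhoQ.
pose D := hadj P *m P.
have hD : hadj D = D by rewrite /D hadjM hadjK.
have uD : D \in unitmx.
  have -> : D = diag_mx (\row_i ((sqrtC (lam i))^* * sqrtC (lam i))).
    apply/matrixP=> i j; rewrite colsmx_gram !hPsi hadjZ -scalemxAl -scalemxAr orth.
    rewrite !mxE eqxx mulr1n; case: eqP => [->|_]; first by rewrite mulr1n mulr1.
    by rewrite !mulr0n !mulr0.
  rewrite unitmxE det_diag unitfE; apply/prodf_neq0 => i _.
  rewrite mxE mulf_neq0 ?conjC_eq0 // sqrtC_eq0 lt0r_neq0 //.
pose Di := invmx D.
pose V := hadj Q *m P *m Di.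
have key : hadj Q = V *m hadj P.
  pose E := hadj Q *m (1%:M - P *m Di *m hadj P).
  have hE : E = hadj Q - V *m hadj P by rewrite /E mulmxBr mulmx1 /V !mulmxA.
  apply/eqP; rewrite -subr_eq0 -hE; apply/eqP/hadj_eq0.
  rewrite /E hadjM hadjK -mulmxA (mulmxA Q) -rhoQ rhoP.
  rewrite -[P *m hadj P *m _]mulmxA.
  have -> : hadj P *m (1%:M - P *m Di *m hadj P) = 0.
    by rewrite mulmxBr mulmx1 !mulmxA -/D (mulmxV uD) mul1mx subrr.
  by rewrite !mulmx0.
have VV : hadj V *m V = 1%:M.
  rewrite /V !hadjM !hadjK !mulmxA -(mulmxA _ Q) -rhoQ rhoP.
  rewrite -!mulmxA (mulmxA (hadj P) P) -/D (mulmxA (hadj P) P) -/D.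
  rewrite (mulmxV uD) mulmx1 -hD -hadjM (mulmxV uD) hadj1 //.
have [W [AW rW]] := exists_W fA fA' rK.
exists V, W^T; split => //; first by rewrite mxrank_tr.
move=> m x /submxP [y hy].
have hx : x = (\matrix_n (v n)^T)^T *m y^T by rewrite -trmx_mul -hy trmxK.
have FA : F' m *m (\matrix_n (v' n)^T)^T = V *m (F m *m (\matrix_n (v n)^T)^T).
  rewrite -!colsmx_tr -!colsmxM; apply: eq_colsmx => n.
  by rewrite -gQ -gP !gram_colsmx key mulmxA.
rewrite hx !mulmxA -(mulmxA _ (W^T)) -trmx_mul AW -[hadj V *m F' m *m _]mulmxA FA mulmxA VV mul1mx //.
Qed.
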